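(* Let $N\ge 1$ be the number of users, indexed $1,\dots,N$. For each user $i$ let $\mathbf{x}_i$ be an observed feature vector and let $\phi(\mathbf{x}_i,\ell)\in\mathbb{R}$ be given for $\ell\in\{0,1\}$. For each pair $i<j$ let $\mathbf{z}_{i,j}$ be an observed relationship vector (write $\mathbf{z}_{j,i}=\mathbf{z}_{i,j}$) and let $\psi(\mathbf{z}_{i,j},a,b)\in\mathbb{R}$ be given for $a,b\in\{0,1\}$, where $a$ refers to user $i$ and $b$ to user $j$. Assume: (i) if there is no observed relationship between users $i$ and $j$, then $\psi(\mathbf{z}_{i,j},a,b)=0$ for all $a,b\in\{0,1\}$; (ii) for every pair $i<j$, $\psi(\mathbf{z}_{i,j},1,1)=0\le \psi(\mathbf{z}_{i,j},0,0)\le \psi(\mathbf{z}_{i,j},0,1)$ and $\psi(\mathbf{z}_{i,j},0,0)\le \psi(\mathbf{z}_{i,j},1,0)$. Define the energy of a labeling $\mathbf{L}=(\ell_1,\dots,\ell_N)\in\{0,1\}^N$ by $$E(\mathbf{L})=\sum_{i=1}^N\phi(\mathbf{x}_i,\ell_i)+\sum_{i<j}\psi(\mathbf{z}_{i,j},\ell_i,\ell_j).$$ Define the Energy Graph as the directed graph with node set $\{s,t,u_1,\dots,u_N\}$ and edges with capacities: - for each $i$, an edge $(u_i,t)$ with capacity $\phi(\mathbf{x}_i,1)$; - for each $i$, an edge $(s,u_i)$ with capacity $\phi(\mathbf{x}_i,0)+\tfrac12\sum_{j\ne i}\psi(\mathbf{z}_{i,j},0,0)$; - for each pair $i<j$ with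 an observed relationship, edges $(u_i,u_j)$ with capacity $\psi(\mathbf{z}_{i,j},1,0)-\tfrac12\psi(\mathbf{z}_{i,j},0,0)$ and $(u_j,u_i)$ with capacity $\psi(\mathbf{z}_{i,j},0,1)-\tfrac12\psi(\mathbf{z}_{i,j},0,0)$. For a labeling $\mathbf{L}$, the $\mathbf{L}$-configuration cut is the $s$-$t$ cut $(S_{\mathbf{L}},T_{\mathbf{L}})$ with $S_{\mathbf{L}}=\{s\}\cup\{u_i:\ell_i=1\}$ and $T_{\mathbf{L}}=\{t\}\cup\{u_i:\ell_i=0\}$; its capacity is the sum of capacities of all edges directed from a node of $S_{\mathbf{L}}$ to a node of $T_{\mathbf{L}}$. Then for every $\mathbf{L}\in\{0,1\}^N$, $E(\mathbf{L})$ equals the capacity of the $\mathbf{L}$-configuration cut in the Energy Graph.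
   Context: This models classification of social media users as in a target location ($\ell_i=1$) or not ($\ell_i=0$); $\phi$ is the ''profile energy'' and $\psi$ the ''link energy''. An $s$-$t$ cut is a partition of the node set into $S\ni s$ and $T\ni t$. *)

(* Defs.v *)
From mathcomp Require Import all_boot all_order all_algebra.
Set Implicit Arguments. Unset Strict Implicit. Unset Printing Implicit Defensive.
Import Order.TTheory GRing.Theory Num.Theory.
Local Open Scope ring_scope.

(* Labels: false = 0 (not in target location), true = 1. *)

Inductive node (N : nat) := Src | Snk | U of 'I_N.
Arguments Src {N}. Arguments Snk {N}.

Section EnergyGraph.
Variables (R : realFieldType) (N : nat) (X Z : Type).
Variables (x : 'I_N -> X) (z : 'I_N -> 'I_N -> Z).
Variables (phi : X -> bool -> R) (psi : Z -> bool -> bool -> R).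
Variable (obs : 'I_N -> 'I_N -> bool).

Definition energy (L : 'I_N -> bool) : R :=
  \sum_(i < N) phi (x i) (L i)
  + \sum_(i < N) \sum_(j < N | (i < j)%N) psi (z i j) (L i) (L j).

Definition energy_edges : seq (node N * node N * R) :=
  [seq (U i, Snk, phi (x i) true) | i <- enum 'I_N]
  ++ [seq (Src, U i, phi (x i) false
             + 2^-1 * \sum_(j < N | j != i) psi (z i j) false false)
     | i <- enum 'I_N]
  ++ flatten [seq [:: (U p.1, U p.2,
                        psi (z p.1 p.2) true false - 2^-1 * psi (z p.1 p.2) false false);
                      (U p.2, U p.1,
                        psi (z p.1 p.2) false true - 2^-1 * psi (z p.1 p.2) false false)]
             | p : 'I_N * 'I_N <- enum [set: 'I_N * 'I_N] & ((p.1 < p.2)%N && obs p.1 p.2)].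

Definition in_S (L : 'I_N -> bool) (v : node N) : bool :=
  match v with Src => true | Snk => false | U i => L i end.
Definition in_T (L : 'I_N -> bool) (v : node N) : bool :=
  match v with Src => false | Snk => true | U i => ~~ L i end.

Definition config_cut_capacity (L : 'I_N -> bool) : R :=
  \sum_(e <- energy_edges | in_S L e.1.1 && in_T L e.1.2) e.2.

End EnergyGraph.

(* Main.v *)
Require Import Defs.
From mathcomp Require Import all_boot all_order all_algebra.
Import Order.TTheory GRing.Theory Num.Theory.
From mathcomp Require Import ring.
Local Open Scope ring_scope.
Lemma half_sym (R : pzRingType) (N : nat) (f : 'I_N -> R) (c : 'I_N -> 'I_N -> R)
  (hc : forall i j, c j i = c i j) :
  \sum_(i < N) \sum_(j < N | j != i) f i * c i j = \sum_(i < N) \sum_(j < N | (i < j)%N) (f i + f j) * c i j.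
Proof.
have E : forall i : 'I_N, \sum_(j < N | j != i) f i * c i j =
   \sum_(j < N | (i < j)%N) f i * c i j + \sum_(j < N | (j < i)%N) f i * c i j.
  move=> i; rewrite (bigID (fun j : 'I_N => (i < j)%N)) /=; congr (_ + _);
  apply: eq_bigl => j; rewrite -val_eqE /=; case: ltngtP => //.
rewrite (eq_bigr _ (fun i _ => E i)) big_split /=.
rewrite [X in _ + X = _](exchange_big_dep xpredT) //=.
rewrite -big_split /=; apply: eq_bigr => i _.
rewrite -big_split /=; apply: eq_bigr => j _.
by rewrite mulrDl hc.
Qed.

Lemma pairsum (R : pzRingType) (N : nat) (F : 'I_N * 'I_N -> R) (P Q : 'I_N -> 'I_N -> bool) :
  \sum_(p in [set: 'I_N * 'I_N] | P p.1 p.2 && Q p.1 p.2) F p =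
  \sum_(i < N) \sum_(j < N | P i j) (if Q i j then F (i, j) else 0).
Proof.
under [RHS]eq_bigr do rewrite -big_mkcondr.
rewrite pair_big_dep /=.
by apply: eq_big => [[i j]|[i j] _] //=; rewrite in_setT.
Qed.

Theorem lemma1 (R : realFieldType) (N : nat) (X Z : Type)
  (x : 'I_N -> X) (z : 'I_N -> 'I_N -> Z)
  (phi : X -> bool -> R) (psi : Z -> bool -> bool -> R)
  (obs : 'I_N -> 'I_N -> bool)
  (hN : (1 <= N)%N)
  (hz : forall i j, z j i = z i j)
  (h_noobs : forall i j : 'I_N, (i < j)%N -> ~~ obs i j ->
       forall a b, psi (z i j) a b = 0)
  (h_psi : forall i j : 'I_N, (i < j)%N ->
       [/\ psi (z i j) true true = 0,
           0 <= psi (z i j) false false,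
           psi (z i j) false false <= psi (z i j) false true
         & psi (z i j) false false <= psi (z i j) true false]) :
  forall L : 'I_N -> bool,
    energy x z phi psi L = config_cut_capacity x z phi psi obs L.
Proof.
move=> L; rewrite /config_cut_capacity /energy_edges !big_cat !big_map.
rewrite big_flatten big_map big_filter !big_enum_cond /=.
under [X in _ + (_ + X)]eq_bigr do rewrite !big_cons big_nil /=.
rewrite (@pairsum _ _ _ (fun i j => (i < j)%N) obs) /=.
rewrite big_split /= -mulr_sumr.
have -> : \sum_(j < N | ~~ L j) \sum_(j0 < N | j0 != j) psi (z j j0) false false
   = \sum_(i < N) \sum_(j < N | j != i) (if L i then 0 else 1) * psi (z i j) false false.
  rewrite [RHS](bigID L) /= [X in _ = X + _]big1 ?add0r; last by move=> i ->; apply: big1 => j _; rewrite mul0r.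
  by apply: eq_bigr => i /negbTE ->; apply: eq_bigr => j _; rewrite mul1r.
rewrite (@half_sym _ _ (fun i => if L i then 0 else 1) (fun i j => psi (z i j) false false)); last by move=> i j; rewrite hz.
rewrite /energy (bigID L) /=.
rewrite -!addrA; congr (_ + _).
  by apply: eq_big => [i|i ->]; rewrite ?andbT.
congr (_ + _).
  by apply: eq_bigr => i /negbTE ->.
rewrite mulr_sumr -big_split; apply: eq_bigr => i _.
rewrite mulr_sumr -big_split; apply: eq_bigr => j hij /=.
have [p11 p00 _ _] := h_psi i j hij.
case: (boolP (obs i j)) => ho; last first.
  by rewrite !(h_noobs i j hij ho) !mulr0 addr0.
case: (L i); case: (L j) => /=; [by rewrite p11; ring | ring | ring |].
by field.
Qed.
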